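(* Let $\mathcal{C}$ be a full reflective subcategory of $\mathsf{Top}$ that is contained in the category $\mathsf{Haus}$ of Hausdorff spaces and contains the category $\mathsf{Tych}$ of Tychonoff spaces. Then the empty space is the only object of $\mathcal{C}$ that is finitely generated with respect to embeddings.
   Context: An embedding is an injective continuous map $m:X\to Y$ such that every open set of $X$ has the form $m^{-1}(U)$ for $U$ open in $Y$. An object $X$ of $\mathcal{C}$ is finitely generated w.r.t. embeddings if for every directed diagram $(Z_i)_{i\in I}$ in $\mathcal{C}$ (indexed by a directed poset, i.e. every finite subset has an upper bound) whose connecting morphisms $z_{i,j}$ are embeddings, with colimit cocone $c_i:Z_i\to Z$ in $\mathcal{C}$, every morphism $f:X\to Z$ factorizes as $f=c_i\cdot g$ for some $i$ and $g:X\to Z_i$, and if also $f=c_i\cdot g'$ then $z_{i,j}\cdot g=z_{i,j}\cdot g'$ for some connecting morphism $z_{i,j}$. *)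

(* Defs.v *)
From HB Require Import structures.
From mathcomp Require Import all_boot all_order all_algebra.
From mathcomp Require Import all_classical all_reals topology.
From mathcomp Require Import Rstruct Rstruct_topology.

Set Implicit Arguments.
Unset Strict Implicit.
Unset Printing Implicit Defensive.

Local Open Scope classical_set_scope.

Definition embedding (X Y : topologicalType) (m : X -> Y) : Prop :=
  injective m /\ continuous m /\
  forall U : set X, open U -> exists V : set Y, open V /\ U = m @^-1` V.

Definition tychonoff_space (X : topologicalType) : Prop :=
  accessible_space X /\
  forall (x : X) (B : set X), closed B -> ~ B x ->
    exists f : X -> Rdefinitions.R, continuous f /\ f x = 0%R /\
      (forall b, B b -> f b = 1%R).

(* A full subcategory of Top is given by a predicate on spaces
   (morphisms: all continuous maps).  Reflectivity: every space has a
   reflection into C. *)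
Definition reflective (C : topologicalType -> Prop) : Prop :=
  forall X : topologicalType, exists (RX : topologicalType) (eta : X -> RX),
    [/\ C RX, continuous eta &
      forall Y : topologicalType, C Y -> forall f : X -> Y, continuous f ->
        exists! g : RX -> Y, continuous g /\ g \o eta = f].

Definition directed_poset (I : Type) (le : I -> I -> Prop) : Prop :=
  [/\ (forall i, le i i),
      (forall i j k, le i j -> le j k -> le i k),
      (forall i j, le i j -> le j i -> i = j) &
      (forall s : list I, exists j, forall i, List.In i s -> le i j)].

Definition embedding_diagram (C : topologicalType -> Prop)
    (I : Type) (le : I -> I -> Prop)
    (Z : I -> topologicalType) (z : forall i j, Z i -> Z j) : Prop :=
  [/\ directed_poset le,
      (forall i, C (Z i)),
      (forall i j, le i j -> embedding (z i j)),
      (forall i, z i i = (fun x => x)) &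
      (forall i j k, le i j -> le j k -> z j k \o z i j = z i k)].

Definition is_colimit (C : topologicalType -> Prop)
    (I : Type) (le : I -> I -> Prop)
    (Z : I -> topologicalType) (z : forall i j, Z i -> Z j)
    (L : topologicalType) (c : forall i, Z i -> L) : Prop :=
  [/\ C L,
      (forall i, continuous (c i)),
      (forall i j, le i j -> c j \o z i j = c i) &
      (forall Y : topologicalType, C Y -> forall d : forall i, Z i -> Y,
         (forall i, continuous (d i)) ->
         (forall i j, le i j -> d j \o z i j = d i) ->
         exists! u : L -> Y, continuous u /\ forall i, u \o c i = d i)].

Definition fg_wrt_embeddings (C : topologicalType -> Prop)
    (X : topologicalType) : Prop :=
  forall (I : Type) (le : I -> I -> Prop)
    (Z : I -> topologicalType) (z : forall i j, Z i -> Z j)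
    (L : topologicalType) (c : forall i, Z i -> L),
  embedding_diagram C le z -> is_colimit C le z c ->
  forall f : X -> L, continuous f ->
    (exists i (g : X -> Z i), continuous g /\ f = c i \o g) /\
    (forall i (g g' : X -> Z i), continuous g -> continuous g' ->
       f = c i \o g -> f = c i \o g' ->
       exists j, le i j /\ z i j \o g = z i j \o g').

(* Main.v *)
Require Import Defs.
From HB Require Import structures.
From mathcomp Require Import all_boot all_order all_algebra.
From mathcomp Require Import all_classical all_reals topology.
From mathcomp Require Import Rstruct Rstruct_topology.
Set Implicit Arguments. Unset Strict Implicit.
Local Open Scope classical_set_scope.

Lemma tych_crit (X : topologicalType) :
  (forall x : X, open (~` [set x])) ->
  (forall (x : X) (U : set X), open U -> U x ->
     exists K : set X, [/\ open K, open (~` K), K x & K `<=` U]) ->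
  tychonoff_space X.
Proof.
move=> H1 H2; split.
  move=> x y xy; exists (~` [set y]); split => //.
    by rewrite inE => /= yx; move: xy; rewrite yx eqxx.
  by rewrite inE => /=; apply.
move=> x B cB nBx.
have oB : open (~` B) by rewrite openC.
have [K [oK oCK Kx KU]] := H2 x (~` B) oB nBx.
exists (fun y => if `[< K y >] then 0%R else 1%R); split.
- move=> y; case: (pselect (K y)) => Ky.
    apply: (near_cst_continuous (0%R : Rdefinitions.R)).
    have : nbhs y K by apply: open_nbhs_nbhs; split.
    by apply: filterS => t Kt /=; rewrite asboolT.
  apply: (near_cst_continuous (1%R : Rdefinitions.R)).
  have : nbhs y (~` K) by apply: open_nbhs_nbhs; split.
  by apply: filterS => t Kt /=; rewrite asboolF.
split; first by rewrite asboolT.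
by move=> b Bb; rewrite asboolF // => /KU; apply.
Qed.

Definition PT := (bool + (nat * nat))%type.
Definition opT (U : set PT) : Prop :=
  (U (inl true) -> forall i, exists N, forall j, (N <= j)%N -> U (inr (i, j))) /\
  (U (inl false) -> forall g : nat -> nat, exists N, forall n, (N <= n)%N -> U (inr (n, g n))).
Lemma opT_T : opT setT. Proof. by split=> _ *; exists 0%N. Qed.
Lemma opT_I : setI_closed opT.
Proof.
move=> A B [A1 A2] [B1 B2]; split.
  move=> [/A1 HA /B1 HB] i; have [N1 H1] := HA i; have [N2 H2] := HB i.
  exists (maxn N1 N2) => j; rewrite geq_max => /andP[j1 j2]; split; [exact: H1|exact: H2].
move=> [/A2 HA /B2 HB] g; have [N1 H1] := HA g; have [N2 H2] := HB g.
exists (maxn N1 N2) => j; rewrite geq_max => /andP[j1 j2]; split; [exact: H1|exact: H2].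
Qed.
Lemma opT_U (I : Type) (f : I -> set PT) : (forall i, opT (f i)) -> opT (\bigcup_i f i).
Proof.
move=> H; split.
  move=> [k _ /(proj1 (H k)) Hk] i; have [N HN] := Hk i; exists N => j /HN; by exists k.
move=> [k _ /(proj2 (H k)) Hk] g; have [N HN] := Hk g; exists N => j /HN; by exists k.
Qed.
Definition T : Type := PT.
HB.instance Definition _ := Choice.on T.
HB.instance Definition _ := isOpenTopological.Build T opT_T opT_I opT_U.
Lemma openTE (U : set T) : open U = opT U. Proof. by []. Qed.

Lemma opT_C1 (t : T) : opT (~` [set t]).
Proof.
split.
  move=> _ i; exists (match t with inr p => p.2.+1 | _ => 0%N end) => j Nj.
  by case: t Nj => // -[i0 j0] /= Nj [_ E]; move: Nj; rewrite E ltnn.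
move=> _ g; exists (match t with inr p => p.1.+1 | _ => 0%N end) => n Nn.
by case: t Nn => // -[i0 j0] /= Nn [E _]; move: Nn; rewrite E ltnn.
Qed.

Definition PL := option (nat * nat).
Definition opL (U : set PL) : Prop :=
  U None -> (forall i, exists N, forall j, (N <= j)%N -> U (Some (i, j))) /\
            (forall g : nat -> nat, exists N, forall n, (N <= n)%N -> U (Some (n, g n))).
Lemma opL_T : opL setT. Proof. by split=> *; exists 0%N. Qed.
Lemma opL_I : setI_closed opL.
Proof.
move=> A B HA HB [/HA [A1 A2] /HB [B1 B2]]; split.
  move=> i; have [N1 H1] := A1 i; have [N2 H2] := B1 i.
  exists (maxn N1 N2) => j; rewrite geq_max => /andP[j1 j2]; split; [exact: H1|exact: H2].
move=> g; have [N1 H1] := A2 g; have [N2 H2] := B2 g.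
exists (maxn N1 N2) => j; rewrite geq_max => /andP[j1 j2]; split; [exact: H1|exact: H2].
Qed.
Lemma opL_U (I : Type) (f : I -> set PL) : (forall i, opL (f i)) -> opL (\bigcup_i f i).
Proof.
move=> H [k _ /(H k) [Hk1 Hk2]]; split.
  move=> i; have [N HN] := Hk1 i; exists N => j /HN; by exists k.
move=> g; have [N HN] := Hk2 g; exists N => j /HN; by exists k.
Qed.
Definition L : Type := PL.
HB.instance Definition _ := Choice.on L.
HB.instance Definition _ := isOpenTopological.Build L opL_T opL_I opL_U.
Lemma openLE (U : set L) : open U = opL U. Proof. by []. Qed.

Lemma openL_noNone (U : set L) : ~ U None -> open U.
Proof. by move=> nU; rewrite openLE => /nU. Qed.

Lemma openL_C1 (t : L) : open (~` [set t]).
Proof.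
case: t => [[i0 j0]|]; last by apply: openL_noNone => /=; apply.
rewrite openLE => _; split.
  by move=> i; exists j0.+1 => j Nj [_ E]; move: Nj; rewrite E ltnn.
by move=> g; exists i0.+1 => n Nn [E _]; move: Nn; rewrite E ltnn.
Qed.

Lemma tychL : tychonoff_space L.
Proof.
apply: tych_crit; first exact: openL_C1.
move=> [p|] U oU Ux.
  exists [set Some p]; split.
  - by apply: openL_noNone => /= E.
  - exact: openL_C1.
  - by [].
  - by move=> t ->.
exists U; split => //; apply: openL_noNone => /=; apply; exact: Ux.
Qed.

Definition cT (y : T) : L := match y with inl _ => None | inr p => Some p end.

Lemma cT_cont : continuous cT.
Proof.
apply/continuousP => V; rewrite openLE openTE => oV; split.
  by move=> /oV [H _] i; have [N HN] := H i; exists N => j /HN.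
by move=> /oV [_ H] g; have [N HN] := H g; exists N => j /HN.
Qed.

Definition Idx := (nat * (nat -> nat))%type.
Definition leI (k k' : Idx) : Prop := (k.1 <= k'.1)%N /\ forall i, (k.2 i <= k'.2 i)%N.
Definition A (k : Idx) : set T :=
  fun y => match y with inl _ => True | inr p => (p.1 < k.1)%N \/ (p.2 <= k.2 p.1)%N end.
Definition Z (k : Idx) : topologicalType := set_type (A k).

Lemma openZE k (U : set (Z k)) :
  open U = exists2 V : set T, open V & set_val @^-1` V = U.
Proof. by []. Qed.

Lemma A_inl k b : inl b \in A k. Proof. by rewrite inE. Qed.
Definition a0 k : Z k := exist _ (inl true) (A_inl k true).
Definition b0 k : Z k := exist _ (inl false) (A_inl k false).

Lemma A_mono k k' : leI k k' -> A k `<=` A k'.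
Proof.
move=> [h1 h2] [b|[i j]] //= [H|H]; first by left; apply: leq_trans H h1.
by right; apply: leq_trans H (h2 i).
Qed.

Lemma tychZ k : tychonoff_space (Z k).
Proof.
case: k => N g.
apply: tych_crit.
  move=> x; rewrite openZE; exists (~` [set set_val x]); first by rewrite openTE; exact: opT_C1.
  apply/seteqP; split => y /=.
    by move=> H E; apply: H; rewrite E.
  by move=> H E; apply: H; apply: val_inj.
move=> x U; rewrite openZE => -[V oV <-] /= Vx.
case Ex: (set_val x) Vx => [[]|p] Vx.
-
  pose Ka : set T := fun y => y = inl true \/
     exists i j, y = inr (i, j) /\ V (inr (i, j)) /\ (g i < j)%N.
  exists (set_val @^-1` Ka); split.
  + rewrite openZE; exists Ka => //; rewrite openTE; split; last by move=> [E|[i [j [E _]]]]; discriminate.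
    move=> _ i; move: oV; rewrite openTE => -[/(_ Vx) H _].
    have [M HM] := H i; exists (maxn M (g i).+1) => j; rewrite geq_max => /andP[j1 j2].
    by right; exists i, j; split => //; split => //; apply: HM.
  + rewrite openZE; exists (~` Ka `|` ~` A (N, g)).
      rewrite openTE; split; first by case=> H; exfalso; apply: H => //; left.
      move=> _ g'; exists N => n Nn.
      case: (leqP (g' n) (g n)) => hg.
        left => -[//|[i [j [[E1 E2] [_ H]]]]].
        by move: H; rewrite -E1 -E2 ltnNge hg.
      by right => /= -[|]; [rewrite ltnNge Nn | rewrite leqNgt hg].
    apply/seteqP; split => y /=; last by left.
    case=> // H; exfalso; apply: H; exact: (set_valP y).
  + by left.
  + move=> y /= [->|[i [j [-> [H _]]]]] //.
-
  pose Kb : set T := fun y => y = inl false \/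
     exists i j, y = inr (i, j) /\ V (inr (i, j)) /\ (N <= i)%N.
  exists (set_val @^-1` Kb); split.
  + rewrite openZE; exists Kb => //; rewrite openTE; split; first by move=> [E|[i [j [E _]]]]; discriminate.
    move=> _ g'; move: oV; rewrite openTE => -[_ /(_ Vx) H].
    have [M HM] := H g'; exists (maxn M N) => n; rewrite geq_max => /andP[n1 n2].
    by right; exists n, (g' n); split => //; split => //; apply: HM.
  + rewrite openZE; exists (~` Kb `|` ~` A (N, g)).
      rewrite openTE; split; last by case=> H; exfalso; apply: H => //; left.
      move=> _ i; exists (g i).+1 => j Nj.
      case: (ltnP i N) => hi.
        left => -[//|[i' [j' [[E1 E2] [_ H]]]]].
        by move: H; rewrite -E1 leqNgt hi.
      by right => /= -[|]; [rewrite ltnNge hi | rewrite leqNgt Nj].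
    apply/seteqP; split => y /=; last by left.
    case=> // H; exfalso; apply: H; exact: (set_valP y).
  + by left.
  + move=> y /= [->|[i [j [-> [H _]]]]] //.
-
  exists [set x]; split.
  + rewrite openZE; exists [set inr p].
      rewrite openTE; by split => //.
    apply/seteqP; split => y /=; first by move=> E; apply: val_inj; rewrite -[val y]/(set_val y) -[val x]/(set_val x) E Ex.
    by move=> ->.
  + rewrite openZE; exists (~` [set set_val x]); first by rewrite openTE; exact: opT_C1.
    apply/seteqP; split => y /=.
      by move=> H E; apply: H; rewrite E.
    by move=> H E; apply: H; apply: val_inj.
  + by [].
  + by move=> y -> /=; move: Vx; rewrite -Ex.
Qed.

Definition z (k k' : Idx) (x : Z k) : Z k' := insubd (a0 k') (set_val x).
Arguments z : clear implicits.

Lemma val_z k k' (x : Z k) : leI k k' -> set_val (z k k' x) = set_val x.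
Proof.
move=> le; rewrite /z set_valE val_insubd.
by rewrite (mem_set (A_mono le (set_valP x))).
Qed.

Lemma leI_refl k : leI k k. Proof. by split. Qed.
Lemma leI_trans k1 k2 k3 : leI k1 k2 -> leI k2 k3 -> leI k1 k3.
Proof.
move=> [a1 a2] [b1 b2]; split; first exact: leq_trans a1 b1.
by move=> i; apply: leq_trans (a2 i) (b2 i).
Qed.
Definition jn (k k' : Idx) : Idx := (maxn k.1 k'.1, fun i => maxn (k.2 i) (k'.2 i)).
Lemma leI_jnl k k' : leI k (jn k k').
Proof. by split => [|i]; rewrite /= leq_maxl. Qed.
Lemma leI_jnr k k' : leI k' (jn k k').
Proof. by split => [|i]; rewrite /= leq_maxr. Qed.

Lemma directedI : directed_poset leI.
Proof.
split.
- exact: leI_refl.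
- exact: leI_trans.
- move=> [N g] [N' g'] [/= h1 h2] [/= h3 h4].
  have -> : N = N' by apply/eqP; rewrite eqn_leq h1 h3.
  have -> // : g = g' by apply: funext => i; apply/eqP; rewrite eqn_leq h2 h4.
- elim=> [|x s [j Hj]]; first by exists (0%N, fun _ => 0%N).
  exists (jn x j) => i /= [<-|/Hj Hi]; first exact: leI_jnl.
  exact: leI_trans Hi (leI_jnr _ _).
Qed.

Lemma embedding_z k k' : leI k k' -> embedding (z k k').
Proof.
move=> le; split; [|split].
- by move=> x y E; apply: val_inj; rewrite -[val x]/(set_val x) -(val_z x le) E val_z.
- apply/continuousP => U; rewrite !openZE => -[V oV <-]; exists V => //.
  by apply/seteqP; split => x /=; rewrite val_z.
- move=> U; rewrite openZE => -[V oV <-]; exists (set_val @^-1` V); split.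
    by rewrite openZE; exists V.
  by apply/seteqP; split => x /=; rewrite val_z.
Qed.

Lemma z_id k : z k k = (fun x => x).
Proof. by apply: funext => x; apply: val_inj; rewrite -[val _]/(set_val _) val_z //; exact: leI_refl. Qed.

Lemma z_comp k1 k2 k3 : leI k1 k2 -> leI k2 k3 -> z k2 k3 \o z k1 k2 = z k1 k3.
Proof.
move=> l1 l2; apply: funext => x; apply: val_inj => /=.
rewrite -[val _]/(set_val _) -[val (z k1 k3 x)]/(set_val _) !val_z //.
exact: leI_trans l1 l2.
Qed.

Definition c (k : Idx) (x : Z k) : L := cT (set_val x).
Arguments c : clear implicits.

Lemma c_cont k : continuous (c k).
Proof.
apply/continuousP => V oV; rewrite openZE; exists (cT @^-1` V) => //.
by move/continuousP: cT_cont; apply.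
Qed.

Lemma c_comp k k' : leI k k' -> c k' \o z k k' = c k.
Proof. by move=> le; apply: funext => x /=; rewrite /c val_z. Qed.

Section Univ.
Local Unset Implicit Arguments.
Variables (Y : topologicalType) (HY : hausdorff_space Y)
  (d : forall k, Z k -> Y) (dc : forall k, continuous (d k))
  (dcomp : forall k k', leI k k' -> d k' \o z k k' = d k).

Definition idx (t : T) : Idx :=
  match t with inl _ => (0%N, fun _ => 0%N) | inr p => (p.1.+1, fun _ => 0%N) end.
Lemma A_idx t : A (idx t) t. Proof. by case: t => // -[i j]; left => /=. Qed.
Definition pt (t : T) : Z (idx t) := exist _ t (mem_set (A_idx t)).
Definition h (t : T) : Y := d (idx t) (pt t).

Lemma key k (x : Z k) : d k x = h (set_val x).
Proof.
rewrite /h; set m := jn k (idx (set_val x)).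
rewrite -(dcomp _ _ (leI_jnl k (idx (set_val x)))) -(dcomp _ _ (leI_jnr k (idx (set_val x)))) /=.
by congr (d _ _).
Qed.

Lemma helper k (t : T) (P : set Y) : A k t -> open P -> P (h t) ->
  exists V : set T, [/\ open V, V t & forall y, A k y -> V y -> P (h y)].
Proof.
move=> At oP Pt.
have := (proj1 (continuousP (d k)) (dc k)) P oP; rewrite openZE => -[V oV EV].
exists V; split => //.
  have : (set_val @^-1` V) (exist _ t (mem_set At) : Z k) by rewrite EV /= key.
  by [].
move=> y Ay Vy.
have : (set_val @^-1` V) (exist _ y (mem_set Ay) : Z k) by [].
by rewrite EV /= key.
Qed.

Lemma cols (P : set Y) : open P -> P (h (inl true)) ->
  forall i, exists N, forall j, (N <= j)%N -> P (h (inr (i, j))).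
Proof.
move=> oP Pa i.
have [V [oV Va HV]] := helper (i.+1, fun _ => 0%N) (inl true) P I oP Pa.
move: oV; rewrite openTE => -[/(_ Va) H _].
have [N HN] := H i; exists N => j /HN; apply: HV; by left => /=.
Qed.

Lemma grs (P : set Y) : open P -> P (h (inl false)) ->
  forall g, exists N, forall n, (N <= n)%N -> P (h (inr (n, g n))).
Proof.
move=> oP Pb g.
have [V [oV Vb HV]] := helper (0%N, g) (inl false) P I oP Pb.
move: oV; rewrite openTE => -[_ /(_ Vb) H].
have [N HN] := H g; exists N => n /HN; apply: HV; by right => /=.
Qed.

Lemma hab : h (inl true) = h (inl false).
Proof.
apply: HY; rewrite /cluster /meets /= => P Q; rewrite !nbhsE => -[P' [oP' P'a] P'P] [Q' [oQ' Q'b] Q'Q].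
have [f Hf] := choice (cols _ oP' P'a).
have [N HN] := grs _ oQ' Q'b f.
exists (h (inr (N, f N))); split.
  by apply: P'P; apply: Hf.
by apply: Q'Q; apply: HN.
Qed.

Definition u (l : L) : Y := match l with None => h (inl true) | Some p => h (inr p) end.

Lemma univ : exists! u : L -> Y, continuous u /\ forall k, u \o c k = d k.
Proof.
exists u; split; first split.
- apply/continuousP => P oP; rewrite openLE => /= Pa; split.
    exact: cols.
  by apply: grs; rewrite // -hab.
- move=> k; apply: funext => x /=; rewrite key /c.
  by case: (set_val x) => [[]|p] //=; rewrite hab.
- move=> u' [_ Hu']; apply: funext => -[p|].
    by rewrite /= /h -(Hu' (idx (inr p))).
  by rewrite /= /h -(Hu' (idx (inl true))).
Qed.
End Univ.

Unset Implicit Arguments.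
Definition E0 : topologicalType := set_type (@set0 L).

Theorem corollary4p4 (C : topologicalType -> Prop) :
  reflective C ->
  (forall X : topologicalType, C X -> hausdorff_space X) ->
  (forall X : topologicalType, tychonoff_space X -> C X) ->
  (exists X : topologicalType, C X /\ ~ inhabited X) /\
  (forall X : topologicalType, C X ->
     (fg_wrt_embeddings C X <-> ~ inhabited X)).
Proof.
move=> _ HH HT; split.
  exists E0; split; last by case=> x; exact: (set_valP x).
  apply: HT; split; first by move=> x; have := set_valP x.
  by move=> x; have := set_valP x.
move=> X CX; split.
  move=> Hfg [x0].
  have Hd : embedding_diagram C leI z.
    split.
    - exact: directedI.
    - by move=> k; apply: HT; exact: tychZ.
    - exact: embedding_z.
    - exact: z_id.
    - exact: z_comp.
  have Hc : is_colimit C leI z c.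
    split.
    - exact: HT tychL.
    - exact: c_cont.
    - exact: c_comp.
    - move=> Y CY d dc dcomp; exact: (@univ Y (HH _ CY) d dc dcomp).
  have [_ H2] := Hfg Idx leI Z z L c Hd Hc (fun _ => None) (@cst_continuous X L None).
  pose k0 : Idx := (0%N, fun _ => 0%N).
  have [j [lej Ej]] := H2 k0 (fun _ => a0 k0) (fun _ => b0 k0)
     (@cst_continuous X (Z k0) (a0 k0)) (@cst_continuous X (Z k0) (b0 k0)) (funext (fun _ => erefl)) (funext (fun _ => erefl)).
  have := congr1 (fun f => set_val (f x0)) Ej.
  by rewrite /= !val_z.
move=> Hne I le Zs zs Ls cs [[Hr _ _ Hub] _ _ _ _] _ f fc; split.
  have [j _] := Hub [::].
  exists j, (fun x => False_rect _ (Hne (inhabits x))); split.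
    by move=> x; exfalso; apply: Hne; exists.
  by apply: funext => x; exfalso; apply: Hne; exists.
move=> i g g' _ _ _ _; exists i; split; first exact: Hr.
by apply: funext => x; exfalso; apply: Hne; exists.
Qed.
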